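(* Let $\mathcal{P}=\langle P,\le\rangle$ be a finite bounded poset with $|P|\ge 2$. Then there exists $m\in\mathbb{N}$ such that $(R^+_{All})^m(\mathcal{P})$ is graded.
   Context: A poset is bounded if it has a least element $\bot$ and greatest element $\top$. The height $H$ of a finite poset is the number of elements in its largest chain. $a\lessdot b$ denotes covering. A bounded poset with top $\top$ and height $H$ is graded if there is $\rho:P\to\{0,\dots,H-1\}$ with $\rho(\top)=0$ and $\rho(a)=\rho(b)-1$ whenever $a\lessdot b$. For $a\in P$, $\uparrow a=\{b:b\ge a\}$, $\downarrow a=\{b:b\le a\}$ as subposets; the standard interval rank is $R^+(a)=[H(\uparrow a)-1,\;H(\mathcal{P})-H(\downarrow a)]$. Weak order: $[x_*,x^*]\le_W[y_*,y^*]$ iff $x_*\le y_*$ and $x^*\le y^*$. Define $R^+_{All}(\mathcal{P})=\langle P,\le_{R_A}\rangle$ on the same underlying set, where $p<_{R_A}q$ iff $R^+(p)>_W R^+(q)$ (strictly), and $\le_{R_A}$ is the reflexive closure of $<_{R_A}$ (so distinct elements with equal standard interval rank are incomparable). $(R^+_{All})^m$ denotes $m$-fold iteration, each time computing $R^+$ in the current poset. *)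

(* Defs.v *)
From mathcomp Require Import all_boot.
Set Implicit Arguments. Unset Strict Implicit. Unset Printing Implicit Defensive.

(* A finite poset is a finType T with an order relation le : rel T.
   Subposets are subsets S : {set T} with the induced relation. *)

Section PosetDefs.
Variable T : finType.
Variable le : rel T.

Definition is_poset : Prop :=
  [/\ reflexive le, antisymmetric le & transitive le].

Definition lt (a b : T) : bool := le a b && (a != b).

Definition covers (a b : T) : bool :=
  lt a b && ~~ [exists c, lt a c && lt c b].

Definition chainb (C : {set T}) : bool :=
  [forall x in C, forall y in C, le x y || le y x].

Definition height (S : {set T}) : nat :=
  \max_(C : {set T} | (C \subset S) && chainb C) #|C|.

Definition upset (a : T) : {set T} := [set b | le a b].
Definition downset (a : T) : {set T} := [set b | le b a].

(* standard interval rank R^+(a) = [H(up a) - 1, H(P) - H(down a)] *)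
Definition Rplus (a : T) : nat * nat :=
  ((height (upset a)).-1, height [set: T] - height (downset a)).

Definition bounded : Prop :=
  (exists bot : T, forall x, le bot x) /\ (exists top : T, forall x, le x top).

(* graded: bounded, and a rank function with rho(top) = 0, values in
   {0,..,H-1}, and rho(a) = rho(b) + 1 whenever a ⋖ b (rank = distance
   from the top) *)
Definition graded : Prop :=
  (exists bot : T, forall x, le bot x) /\
  exists top : T, (forall x, le x top) /\
    exists rho : T -> nat,
      [/\ rho top = 0,
          (forall a, rho a < height [set: T]) &
          (forall a b, covers a b -> rho a = (rho b).+1)].
End PosetDefs.

Definition weak_le (x y : nat * nat) : bool := (x.1 <= y.1) && (x.2 <= y.2).

Definition RAll (T : finType) (le : rel T) : rel T :=
  fun p q => (p == q) || (weak_le (Rplus le q) (Rplus le p) && (Rplus le p != Rplus le q)).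

(* Main.v *)
Require Import Defs.
From mathcomp Require Import all_boot zify.
Set Implicit Arguments. Unset Strict Implicit.

Section P.
Variable T : finType.
Variable le : rel T.
Hypothesis hp : is_poset le.

Lemma refl_ : reflexive le. Proof. by case: hp. Qed.
Lemma anti_ : antisymmetric le. Proof. by case: hp. Qed.
Lemma trans_ : transitive le. Proof. by case: hp. Qed.

Lemma chainP (C : {set T}) : chainb le C -> forall x y, x \in C -> y \in C -> le x y || le y x.
Proof. move=> /forallP h x y xC yC. by move: (h x); rewrite xC /= => /forallP /(_ y); rewrite yC. Qed.

Lemma chainI (C : {set T}) : (forall x y, x \in C -> y \in C -> le x y || le y x) -> chainb le C.
Proof. move=> h; apply/forallP => x; apply/implyP => xC; apply/forallP => y; apply/implyP => yC; exact: h. Qed.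

Lemma chainS (C D : {set T}) : C \subset D -> chainb le D -> chainb le C.
Proof. move=> /subsetP s hD; apply: chainI => x y xC yC; apply: (chainP hD); exact: s. Qed.

Lemma height_ge (S C : {set T}) : C \subset S -> chainb le C -> #|C| <= height le S.
Proof. move=> s c; rewrite /height; apply: (@leq_bigmax_cond _ (fun C0 : {set T} => (C0 \subset S) && chainb le C0) (fun C0 : {set T} => #|C0|) C); by rewrite s c. Qed.

Lemma height_ex (S : {set T}) : exists C : {set T}, [/\ C \subset S, chainb le C & #|C| = height le S].
Proof.
have h0 : 0 < #|[pred C : {set T} | (C \subset S) && chainb le C]|.
  apply/card_gt0P; exists set0; rewrite inE /= sub0set; apply: chainI => x y; by rewrite inE.
have [C0 HC0 E] := eq_bigmax_cond (fun C : {set T} => #|C|) h0.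
exists C0; move: HC0; rewrite inE /= => /andP [a b]; split => //.
Qed.

Lemma height_sub (S S' : {set T}) : S \subset S' -> height le S <= height le S'.
Proof. move=> s; have [C [a b c]] := height_ex S; rewrite -c; apply: height_ge => //; exact: subset_trans s. Qed.

Lemma height_pos (S : {set T}) x : x \in S -> 0 < height le S.
Proof. move=> xS; have := @height_ge S [set x]; rewrite cards1; apply.
 by rewrite sub1set. apply: chainI => a b; rewrite !inE => /eqP -> /eqP ->; by rewrite refl_. Qed.

Lemma height_card (S : {set T}) : height le S <= #|S|.
Proof. have [C [a b c]] := height_ex S; rewrite -c; exact: subset_leq_card. Qed.

Lemma lt_up a b : lt le a b -> height le (upset le b) < height le (upset le a).
Proof.
move=> /andP [ab nab]; have [C [s c e]] := height_ex (upset le b).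
have aC : a \notin C.
  apply/negP => /(subsetP s); rewrite inE => ba; move/negP: nab; apply; apply/eqP/anti_; by rewrite ab ba.
rewrite -e; have := @height_ge (upset le a) (a |: C); rewrite cardsU1 aC; apply.
  apply/subsetP => x; rewrite !inE => /orP [/eqP ->|]; first exact: refl_.
  move/(subsetP s); rewrite inE; exact: trans_.
apply: chainI => x y; rewrite !inE => /orP [/eqP ->|xC] /orP [/eqP ->|yC].
- by rewrite refl_.
- move: (subsetP s _ yC); rewrite inE => by'; by rewrite (trans_ ab by').
- move: (subsetP s _ xC); rewrite inE => bx; by rewrite (trans_ ab bx) orbT.
- exact: (chainP c xC yC).
Qed.

Lemma lt_down a b : lt le a b -> height le (downset le a) < height le (downset le b).
Proof.
move=> /andP [ab nab]; have [C [s c e]] := height_ex (downset le a).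
have bC : b \notin C.
  apply/negP => /(subsetP s); rewrite inE => ba; move/negP: nab; apply; apply/eqP/anti_; by rewrite ab ba.
rewrite -e; have := @height_ge (downset le b) (b |: C); rewrite cardsU1 bC; apply.
  apply/subsetP => x; rewrite !inE => /orP [/eqP ->|]; first exact: refl_.
  move/(subsetP s); rewrite inE => xa; exact: trans_ xa ab.
apply: chainI => x y; rewrite !inE => /orP [/eqP ->|xC] /orP [/eqP ->|yC].
- by rewrite refl_.
- move: (subsetP s _ yC); rewrite inE => ya; by rewrite (trans_ ya ab) orbT.
- move: (subsetP s _ xC); rewrite inE => xa; by rewrite (trans_ xa ab).
- exact: (chainP c xC yC).
Qed.

Lemma ud_bound a : height le (downset le a) + height le (upset le a) <= (height le [set: T]).+1.
Proof.
have [C1 [s1 c1 e1]] := height_ex (downset le a).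
have [C2 [s2 c2 e2]] := height_ex (upset le a).
have hI : #|C1 :&: C2| <= 1.
  have : C1 :&: C2 \subset [set a].
    apply/subsetP => x /setIP [x1 x2].
    move: (subsetP s1 _ x1) (subsetP s2 _ x2); rewrite !inE => xa ax.
    apply/eqP/anti_; by rewrite xa ax.
  by move/subset_leq_card; rewrite cards1.
have : #|C1 :|: C2| <= height le [set: T].
  apply: height_ge; first exact: subsetT.
  apply: chainI => x y; rewrite !inE => /orP [x1|x2] /orP [y1|y2].
  - exact: chainP c1 _ _ x1 y1.
  - move: (subsetP s1 _ x1) (subsetP s2 _ y2); rewrite !inE => xa ay; by rewrite (trans_ xa ay).
  - move: (subsetP s1 _ y1) (subsetP s2 _ x2); rewrite !inE => ya ax; by rewrite (trans_ ya ax) orbT.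
  - exact: chainP c2 _ _ x2 y2.
rewrite cardsU -e1 -e2. have := subset_leq_card (subsetIl C1 C2). lia.
Qed.

Lemma chain_min n : forall C : {set T}, #|C| = n.+1 -> chainb le C ->
  exists2 y, y \in C & forall z, z \in C -> le y z.
Proof.
elim: n => [|n IH] C hC hch.
  have /cards1P [x ->] : #|C| == 1 by rewrite hC.
  exists x; first by rewrite inE. by move=> z; rewrite inE => /eqP ->; apply: refl_.
have : 0 < #|C| by rewrite hC. case/card_gt0P => x xC.
have hC' : #|C :\ x| = n.+1 by move: hC; rewrite (cardsD1 x) xC; case.
have [y] := IH _ hC' (chainS (subsetDl C [set x]) hch).
rewrite inE => /andP [yx yC] hy.
case/orP: (chainP hch xC yC) => [xy|yx'].
- exists x => // z zC; case: (eqVneq z x) => [->|zx]; first exact: refl_.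
  apply: trans_ xy (hy _ _); by rewrite !inE zx zC.
- exists y => // z zC; case: (eqVneq z x) => [->|zx] //.
  apply: hy; by rewrite !inE zx zC.
Qed.

Lemma step x n : height le (upset le x) = n.+2 ->
  exists y, lt le x y /\ height le (upset le y) = n.+1.
Proof.
move=> hx; have [C [s c e]] := height_ex (upset le x).
have hC : n.+1 <= #|C :\ x|.
  move: e; rewrite hx (cardsD1 x); case: (x \in C) => /=; lia.
have [m hm] : exists m, #|C :\ x| = m.+1 by exists (#|C :\ x|).-1; lia.
have cC' := chainS (subsetDl C [set x]) c.
have [w wC' hw] := chain_min hm cC'.
move: wC'; rewrite !inE => /andP [wx wC].
have xw : le x w by move: (subsetP s _ wC); rewrite inE.
have lxw : lt le x w by rewrite /lt xw eq_sym.
exists w; split => //.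
have h1 := lt_up lxw.
have h2 : #|C :\ x| <= height le (upset le w).
  apply: height_ge => //; apply/subsetP => z zC; rewrite inE; exact: hw.
lia.
Qed.

End P.

Section F.
Variable T : finType.
Variable Q : rel T.
Hypothesis hp : is_poset Q.
Hypothesis hb : bounded Q.
Hypothesis fx : forall p q, RAll Q p q = Q p q.

Local Notation hu a := (height Q (upset Q a)).
Local Notation hd a := (height Q (downset Q a)).
Local Notation H := (height Q [set: T]).

Lemma hu_pos a : 0 < hu a.
Proof. apply: (height_pos hp (x:=a)); rewrite inE; exact: refl_. Qed.
Lemma hd_pos a : 0 < hd a.
Proof. apply: (height_pos hp (x:=a)); rewrite inE; exact: refl_. Qed.
Lemma hu_le a : hu a <= H.
Proof. apply: height_sub => //; exact: subsetT. Qed.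
Lemma hd_le a : hd a <= H.
Proof. apply: height_sub => //; exact: subsetT. Qed.

Lemma level : forall j, j < H -> exists c, hu c = H - j /\ hd c = j.+1.
Proof.
have [[bot hbot] _] := hb.
elim => [|j IH] hj.
  exists bot; split.
    rewrite subn0; congr (height Q _); apply/setP => x; rewrite !inE; exact: hbot.
  have e : downset Q bot = [set bot].
    apply/setP => x; rewrite !inE; apply/idP/idP => [xb|/eqP ->]; last exact: (refl_ hp).
    apply/eqP; apply: (anti_ hp); by rewrite xb hbot.
  rewrite e; have := height_card Q [set bot]; have := height_pos hp (set11 bot).
  rewrite cards1; lia.
have [c [hc1 hc2]] := IH (ltnW hj).
have hcs : hu c = (H - j.+2).+2 by rewrite hc1; lia.
have [y [lcy hy]] := @step _ _ hp c (H - j.+2) hcs.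
exists y; split; first by rewrite hy; lia.
have := lt_down hp lcy; have := ud_bound hp y; lia.
Qed.

Lemma eqRA a : hd a + hu a = H.+1.
Proof.
have h1 := hu_pos a; have h2 := hu_le a; have h3 := hd_le a; have h4 := ud_bound hp a.
have [c [hc1 hc2]] := level (j := H - hu a) ltac:(lia).
have hc1' : hu c = hu a by lia.
case: (ltngtP (hd a + hu a) H.+1) => // hlt; last lia.
have hR : RAll Q a c.
  apply/orP; right; apply/andP; split.
    rewrite /weak_le /=; apply/andP; split; lia.
  apply/negP => /eqP [] _; lia.
rewrite fx in hR.
have lac : lt Q a c.
  rewrite /lt hR /=; apply/eqP => ac; subst c; lia.
have := lt_up hp lac; lia.
Qed.

Lemma fixed_graded : graded Q.
Proof.
have [[bot hbot] [top htop]] := hb.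
split; first by exists bot.
exists top; split => //.
exists (fun a => (hu a).-1); split.
- have e : upset Q top = [set top].
    apply/setP => x; rewrite !inE; apply/idP/idP => [xb|/eqP ->]; last exact: (refl_ hp).
    apply/eqP; apply: (anti_ hp); by rewrite xb htop.
  rewrite e; have := height_card Q [set top]; have := height_pos hp (set11 top).
  rewrite cards1; lia.
- move=> a; have := hu_le a; have := hu_pos a; lia.
move=> a b /andP [lab nex].
have hab := lt_up hp lab.
have ha := hu_le a; have hb0 := hu_pos b.
case: (ltngtP (hu a) (hu b).+1) => hh; [lia| |lia].
have [c [hc1 hc2]] := level (j := H - (hu b).+1) ltac:(lia).
have ea := eqRA a; have eb := eqRA b; have ec := eqRA c.
have lac : lt Q a c.
  have hR : RAll Q a c.
    apply/orP; right; apply/andP; split.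
      rewrite /weak_le /=; apply/andP; split; lia.
    apply/negP => /eqP [] ; lia.
  rewrite fx in hR; rewrite /lt hR /=; apply/eqP => ac; subst c; lia.
have lcb : lt Q c b.
  have hR : RAll Q c b.
    apply/orP; right; apply/andP; split.
      rewrite /weak_le /=; apply/andP; split; lia.
    apply/negP => /eqP [] ; lia.
  rewrite fx in hR; rewrite /lt hR /=; apply/eqP => ac; subst c; lia.
case/negP: nex; apply/existsP; exists c; by rewrite lac lcb.
Qed.

End F.

Lemma sub_RAll (T : finType) (le : rel T) : is_poset le -> forall a b, le a b -> RAll le a b.
Proof.
move=> hp a b ab; rewrite /RAll; case: eqVneq => //= nab.
have lab : lt le a b by rewrite /lt ab nab.
have h1 := lt_up hp lab; have h2 := lt_down hp lab.
have h3 : 0 < height le (upset le b).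
  apply: (height_pos hp (x:=b)); rewrite inE; exact: refl_.
rewrite /Rplus /weak_le /=; apply/andP; split.
  apply/andP; split; lia.
apply/negP => /eqP [] ; lia.
Qed.

Lemma wl_anti (p q : nat * nat) : weak_le p q -> weak_le q p -> p = q.
Proof. case: p q => [p1 p2] [q1 q2]; rewrite /weak_le /= => /andP [h1 h2] /andP [h3 h4]. congr pair; lia. Qed.

Lemma wl_trans (p q r : nat * nat) : weak_le p q -> weak_le q r -> weak_le p r.
Proof. case: p q r => [p1 p2] [q1 q2] [r1 r2]; rewrite /weak_le /= => /andP [h1 h2] /andP [h3 h4]. apply/andP; split; lia. Qed.

Lemma RAll_poset (T : finType) (le : rel T) : is_poset (RAll le).
Proof.
split.
- by move=> a; rewrite /RAll eqxx.
- move=> a b /andP []; rewrite /RAll => /orP [/eqP //|/andP [w1 n1]] /orP [/eqP //|/andP [w2 n2]].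
  by rewrite (wl_anti w1 w2) eqxx in n1.
- move=> b a c; rewrite /RAll => /orP [/eqP -> //|/andP [w1 n1]] /orP [/eqP <-|/andP [w2 n2]].
    by rewrite w1 n1 orbT.
  rewrite (wl_trans w2 w1) /=; apply/orP; right; apply/negP => /eqP e.
  rewrite e in w1 n1; by rewrite (wl_anti w1 w2) eqxx in n2.
Qed.

Lemma stab (f : nat -> nat) N : (forall k, f k <= f k.+1) -> (forall k, f k <= N) ->
  exists k, f k.+1 = f k.
Proof.
move=> hm hN.
have H : forall k, (exists j, f j.+1 = f j) \/ k <= f k.
  elim => [|k [IH|IH]]; [by right| by left|].
  case: (eqVneq (f k.+1) (f k)) => [e|ne]; first by left; exists k.
  right; have := hm k; lia.
case: (H N.+1) => // h; have := hN N.+1; lia.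
Qed.

Theorem lemma1 (T : finType) (le : rel T) :
  is_poset le -> bounded le -> 1 < #|T| ->
  exists m : nat, graded (iter m (@RAll T) le).
Proof.
move=> hp hb _.
pose F k := iter k (@RAll T) le.
have Fp : forall k, is_poset (F k) by case => [|k] //; exact: RAll_poset.
have Fs : forall k a b, F k a b -> F k.+1 a b by move=> k a b; exact: sub_RAll.
have Fb : forall k, bounded (F k).
  elim => [|k [[bot hbot] [top htop]]] //; split; [exists bot|exists top] => x; apply: Fs.
    exact: hbot. exact: htop.
pose c k := #|[set p : T * T | F k p.1 p.2]|.
have cS : forall k, [set p : T * T | F k p.1 p.2] \subset [set p : T * T | F k.+1 p.1 p.2].
  move=> k; apply/subsetP => p; rewrite !inE; exact: Fs.
have [k hk] := @stab c #|{: T * T}| (fun k => subset_leq_card (cS k)) (fun k => max_card _).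
exists k.
have E : [set p : T * T | F k p.1 p.2] = [set p : T * T | F k.+1 p.1 p.2].
  apply/eqP; rewrite eqEcard cS /=; rewrite /c in hk; by rewrite hk.
apply: (fixed_graded (Fp k) (Fb k)).
move=> p q; have := congr1 (fun S : {set T * T} => (p, q) \in S) E; rewrite /= !inE /=.
by move=> ->.
Qed.
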